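(* Let $d\ge1$, let $y=(y_S)_{S\in\mathcal{V}_{n,2d}}$ be a vector over $\mathbb{F}_q$, and let $0\le e\le d-1$ with $r_e=r_{e+1}$. Let $\mathcal{I}\subseteq\mathcal{V}_{n,e}$ be such that the vectors $\{\mathbf{c}_e(B):B\in\mathcal{I}\}$ form a basis of $C_e$. Then for every $i\in[n]$ there is a linear map $T_i:C_e\to C_e$ with $T_i\mathbf{c}_e(B)=\mathbf{c}_e(B\cup\{i\})$ for every $B\in\mathcal{I}$. Moreover, for every $A\in\mathcal{V}_{n,e+1}$ and every $i\in[n]$, the vector $\mathbf{c}_e(A)$ lies in $C_e$ and $T_i\mathbf{c}_e(A)=\mathbf{c}_e(A\cup\{i\})$.
   Context: $\mathbb{F}_q$ is a finite field. $\mathcal{V}_{n,j}:=\{S\subseteq\{1,\dots,n\}:0\le|S|\le j\}$ (including $\emptyset$). For $0\le e\le d$, $H_e(y)$ is the matrix with rows and columns indexed by $\mathcal{V}_{n,e}$ and $(S,T)$ entry $y_{S\cup T}$; $r_e:=\operatorname{rank}H_e(y)$; $C_e$ is the column space of $H_e(y)$. For $A\subseteq[n]$ with $|A|\le2d-e$, the truncated column is $\mathbf{c}_e(A):=(y_{R\cup A})_{R\in\mathcal{V}_{n,e}}\in\mathbb{F}_q^{\mathcal{V}_{n,e}}$. *)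

(* Defs.v *)
From HB Require Import structures.
From mathcomp Require Import all_boot all_algebra.
Set Implicit Arguments. Unset Strict Implicit. Unset Printing Implicit Defensive.
Import GRing.Theory.
Local Open Scope ring_scope.

(* The index set V_{n,j} = { S subset [n] : |S| <= j } as a finite type.
   [n] = {1..n} is modelled by 'I_n. *)
Definition Vn (n j : nat) : predArgType := {S : {set 'I_n} | (#|S| <= j)%N}.
HB.instance Definition _ n j := Finite.on (Vn n j).

(* Vectors in F^{V_{n,e}} are row vectors 'rV_(#|V_{n,e}|), coordinates
   enumerated by enum_val. *)
Definition Hmx (F : fieldType) (n : nat) (y : {set 'I_n} -> F) (e : nat)
  : 'M[F]_(#|{: Vn n e}|) :=
  \matrix_(k, l) y (val (enum_val k) :|: val (enum_val l)).

Definition rk (F : fieldType) (n : nat) (y : {set 'I_n} -> F) (e : nat) : nat :=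
  \rank (Hmx y e).

Definition cvec (F : fieldType) (n : nat) (y : {set 'I_n} -> F) (e : nat)
  (A : {set 'I_n}) : 'rV[F]_(#|{: Vn n e}|) :=
  \row_k y (val (enum_val k) :|: A).

(* C_e = column space of H_e, represented (row-vector convention) as the
   row space of the transpose H_e^T: v in C_e  <->  (v <= Ce y e)%MS. *)
Definition Ce (F : fieldType) (n : nat) (y : {set 'I_n} -> F) (e : nat)
  : 'M[F]_(#|{: Vn n e}|) := (Hmx y e)^T.

Definition Ifam (F : fieldType) (n : nat) (y : {set 'I_n} -> F) (e : nat)
  (I : {set Vn n e}) : 'M[F]_(#|I|, #|{: Vn n e}|) :=
  \matrix_(k < #|I|) cvec y e (val (enum_val k)).

(* Main.v *)
Require Import Defs.
From HB Require Import structures.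
From mathcomp Require Import all_boot all_algebra.
Import GRing.Theory.
Local Open Scope ring_scope.
Set Implicit Arguments. Unset Strict Implicit.

Definition v0 (n j : nat) : Vn n j :=
  @Sub _ _ (Vn n j) (set0 : {set 'I_n}) (eq_ind_r (fun k => (k <= j)%N) (leq0n j) (cards0 _)).

Definition toV (n j : nat) (S : {set 'I_n}) : Vn n j := insubd (v0 n j) S.

Lemma val_toV n j (S : {set 'I_n}) : (#|S| <= j)%N -> val (toV j S) = S.
Proof. by move=> h; rewrite /toV insubdK. Qed.

Definition selmx (p q : nat) (f : 'I_q -> 'I_p) (F : fieldType) : 'M[F]_(p, q) :=
  \matrix_(k, l) (k == f l)%:R.

Lemma selmxE (F : fieldType) p q (f : 'I_q -> 'I_p) (v : 'rV[F]_p) l :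
  (v *m selmx f F) 0 l = v 0 (f l).
Proof.
rewrite !mxE (bigD1 (f l)) //= mxE eqxx mulr1 big1 ?addr0 // => k /negbTE hk.
by rewrite mxE hk mulr0.
Qed.

Lemma row_Ce (F : fieldType) n (y : {set 'I_n} -> F) j k :
  row k (Ce y j) = cvec y j (val (enum_val k)).
Proof. by apply/rowP => l; rewrite !mxE setUC. Qed.

Lemma cvec_sub (F : fieldType) n (y : {set 'I_n} -> F) j (A : {set 'I_n}) :
  (#|A| <= j)%N -> (cvec y j A <= Ce y j)%MS.
Proof.
move=> h; have := row_sub (enum_rank (toV j A)) (Ce y j).
by rewrite row_Ce enum_rankK val_toV.
Qed.

Definition up n e (l : 'I_#|{: Vn n e}|) : 'I_#|{: Vn n e.+1}| :=
  enum_rank (toV e.+1 (val (enum_val l))).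

Definition sh n e (i : 'I_n) (l : 'I_#|{: Vn n e}|) : 'I_#|{: Vn n e.+1}| :=
  enum_rank (toV e.+1 (val (enum_val l) :|: [set i])).

Lemma card_addi n (S : {set 'I_n}) (i : 'I_n) : (#|S :|: [set i]| <= #|S|.+1)%N.
Proof. by have := leq_card_setU S [set i]; rewrite cards1 addn1 => -[]. Qed.

Lemma cvec_up (F : fieldType) n (y : {set 'I_n} -> F) e A :
  cvec y e.+1 A *m selmx (fun l => @up n e l) F = cvec y e A.
Proof.
apply/rowP => l; rewrite selmxE !mxE /up enum_rankK val_toV //.
exact: leqW (valP (enum_val l)).
Qed.

Lemma cvec_sh (F : fieldType) n (y : {set 'I_n} -> F) e i A :
  cvec y e.+1 A *m selmx (fun l => @sh n e i l) F = cvec y e (A :|: [set i]).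
Proof.
apply/rowP => l; rewrite selmxE !mxE /sh enum_rankK val_toV.
  by rewrite -setUA (setUC [set i]).
by apply: leq_trans (card_addi _ _) _; rewrite ltnS; exact: (valP (enum_val l)).
Qed.

Theorem lemma4p4 (F : finFieldType) (n d e : nat) (y : {set 'I_n} -> F)
  (I : {set Vn n e}) :
  (1 <= d)%N -> (e <= d.-1)%N ->
  rk y e = rk y e.+1 ->
  (* {c_e(B) : B in I} is a basis of C_e *)
  row_free (Ifam y I) -> (Ifam y I == Ce y e)%MS ->
  forall i : 'I_n,
  exists T : 'M[F]_(#|{: Vn n e}|),
    (* T is a linear map C_e -> C_e (acting by v |-> v *m T) *)
    (Ce y e *m T <= Ce y e)%MS /\
    (forall B : Vn n e, B \in I ->
       cvec y e (val B) *m T = cvec y e (val B :|: [set i])) /\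
    (forall A : {set 'I_n}, (#|A| <= e.+1)%N ->
       (cvec y e A <= Ce y e)%MS /\
       cvec y e A *m T = cvec y e (A :|: [set i])).
Proof.
move=> _ _ hrk _ /andP [_ G0sub] i.
set G0 := Ce y e; set G1 := Ce y e.+1; set Pm := selmx (fun l => @up n e l) F.
have rkG : \rank G0 = \rank G1 by rewrite /G0 /G1 /Ce !mxrank_tr.
have G0sub1 : (G0 <= G1 *m Pm)%MS.
  apply/row_subP => k; rewrite row_Ce -cvec_up; apply: submxMr.
  by apply: cvec_sub; exact: leqW (valP (enum_val k)).
have rk1 : \rank (G1 *m Pm) = \rank G1.
  apply/eqP; rewrite eqn_leq mxrankM_maxl -rkG; exact: mxrankS.
have ker0 : (G1 :&: kermx Pm)%MS = 0.
  apply/eqP; rewrite -mxrank_eq0; have := mxrank_mul_ker G1 Pm.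
  by rewrite rk1 => /eqP; rewrite -{2}[\rank G1]addn0 eqn_add2l.
have inj : forall v : 'rV_#|{: Vn n e.+1}|, (v <= G1)%MS -> v *m Pm = 0 -> v = 0.
  move=> v hv hP; apply/eqP; by rewrite -submx0 -ker0 sub_capmx hv sub_kermx hP eqxx.
have G1P0 : (G1 *m Pm <= G0)%MS.
  by have := mxrank_leqif_sup G0sub1; rewrite rk1 -rkG => -[_ <-].
have F1 : forall A : {set 'I_n}, (#|A| <= e.+1)%N -> (cvec y e A <= G0)%MS.
  move=> A hA; rewrite -cvec_up; apply: submx_trans G1P0.
  by apply: submxMr; apply: cvec_sub.
set Gi := Ifam y I.
set GiE := \matrix_(k < #|I|) cvec y e.+1 (val (enum_val k)).
have GiE1 : (GiE <= G1)%MS.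
  apply/row_subP => k; rewrite rowK; apply: cvec_sub.
  exact: leqW (valP (enum_val k)).
have GiEP : GiE *m Pm = Gi.
  apply/row_matrixP => k; rewrite row_mul !rowK; exact: cvec_up.
pose T := pinvmx Gi *m (GiE *m selmx (fun l => @sh n e i l) F).
exists T.
have key : forall A : {set 'I_n}, (#|A| <= e.+1)%N ->
    cvec y e A *m (pinvmx Gi *m (GiE *m selmx (fun l => @sh n e i l) F)) = cvec y e (A :|: [set i]).
  move=> A hA.
  have hAi : (cvec y e A <= Gi)%MS by apply: submx_trans G0sub; apply: F1.
  set w := cvec y e A *m pinvmx Gi *m GiE.
  have hw : w = cvec y e.+1 A.
    apply/eqP; rewrite -subr_eq0; apply/eqP; apply: inj.
      rewrite addmx_sub // ?eqmx_opp ?cvec_sub //.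
      by apply: submx_trans GiE1; apply: submxMl.
    by rewrite mulmxBl /w -(mulmxA _ GiE Pm) GiEP mulmxKpV // cvec_up subrr.
  by rewrite (mulmxA _ (pinvmx Gi)) (mulmxA _ GiE) -/w hw cvec_sh.
split.
  apply/row_subP => k; rewrite row_mul row_Ce key; last first.
    exact: leqW (valP (enum_val k)).
  apply: F1; apply: leq_trans (card_addi _ _) _; rewrite ltnS.
  exact: (valP (enum_val k)).
split.
  move=> B _; apply: key; exact: leqW (valP B).
by move=> A hA; split; [apply: F1 | apply: key].
Qed.
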